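(* Let $U(x)=\big(|x|_1-\tfrac{d\lambda'}{\delta'}\big)^2$ and $U^p:=(U)^p$. Then for every $p\in\mathbb{N}$ and every $x\in\mathbb{R}_+^d$ at which $\gamma(x)$ is defined, $\nabla U^p(x)\cdot\gamma(x)\le 0$.
   Context: Fix an integer $d\ge 2$ and constants $\kappa',\lambda',\delta'>0$. Indices are cyclic modulo $d$: $x_0:=x_d$, $x_{d+1}:=x_1$. $\mathbb{R}_+^d=[0,\infty)^d$, $|x|_1=\sum_i|x_i|$, $|\cdot|$ the Euclidean norm, $e_k$ the standard basis. $b(x)=\sum_{k=1}^d e_k\big(\kappa'(x_{k-1}-x_{k+1})x_k+\lambda'-\delta'x_k\big)$ and $\gamma(x)=b(x)/|b(x)|$ (defined wherever $b(x)\ne0$, in particular on all of $\partial\mathbb{R}_+^d$). *)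

(* Defs.v *)
From HB Require Import structures.
From mathcomp Require Import all_boot all_order all_algebra.
From mathcomp Require Import all_classical all_reals all_analysis.
Set Implicit Arguments. Unset Strict Implicit. Unset Printing Implicit Defensive.
Import Order.TTheory GRing.Theory Num.Theory numFieldNormedType.Exports.
Local Open Scope classical_set_scope.
Local Open Scope ring_scope.

Section Defs.
Variables (R : realType) (d : nat).

(* points of R^d are functions 'I_d -> R; cyclic neighbours via ord_pred / ordS *)
Definition l1norm (x : 'I_d -> R) : R := \sum_(i < d) `|x i|.
Definition eucl_norm (x : 'I_d -> R) : R := Num.sqrt (\sum_(i < d) x i ^+ 2).

Definition drift (kap lam del : R) (x : 'I_d -> R) : 'I_d -> R :=
  fun k => kap * (x (ord_pred k) - x (ordS k)) * x k + lam - del * x k.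

Definition gamma (kap lam del : R) (x : 'I_d -> R) : 'I_d -> R :=
  fun k => drift kap lam del x k / eucl_norm (drift kap lam del x).

Definition U (lam del : R) (x : 'I_d -> R) : R :=
  (l1norm x - d%:R * lam / del) ^+ 2.

Definition nonneg_orthant (x : 'I_d -> R) : Prop := forall i, 0 <= x i.

Definition shift (x : 'I_d -> R) (k : 'I_d) (h : R) : 'I_d -> R :=
  fun i => if i == k then x i + h else x i.

(* g is the gradient of f at x, computed with one-sided (right) partial
   derivatives, so that it makes sense on the whole closed orthant R_+^d *)
Definition is_grad_plus (f : ('I_d -> R) -> R) (x g : 'I_d -> R) : Prop :=
  forall k : 'I_d,
    (f (shift x k h) - f x) / h @[h --> (0 : R)^'+] --> g k.

End Defs.

(* Main.v *)
Require Import Defs.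
From HB Require Import structures.
From mathcomp Require Import all_boot all_order all_algebra.
From mathcomp Require Import all_classical all_reals all_analysis.
From mathcomp Require Import ring lra.
Import Order.TTheory GRing.Theory Num.Theory numFieldNormedType.Exports.
Local Open Scope classical_set_scope.
Local Open Scope ring_scope.
Lemma qcvg (R : realType) (a : R) (n : nat) :
  (fun h : R => h^-1 * ((h + a) ^+ n - a ^+ n)) @ (0:R)^' --> n%:R * a ^+ n.-1.
Proof.
have D : is_derive (0:R) 1 ((fun h : R => h + a) ^+ n) ((n%:R * (0 + a) ^+ n.-1) *: 1).
  apply: is_deriveX.
  have -> : (fun h : R => h + a) = id + cst a by [].
  apply: is_derive_eq. by rewrite addr0.
have C := @ex_derive _ _ _ _ _ _ _ D.
move: C; rewrite /derivable => C.
have E := @derive_val _ _ _ _ _ _ _ D.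
rewrite /derive in E.
rewrite E add0r in C.
have -> : n%:R * a ^+ n.-1 = (n%:R * a ^+ n.-1)%:A by rewrite /GRing.scale /= mulr1.
apply: (cvg_trans _ C).
apply: near_eq_cvg; near=> h.
rewrite exprfctE /= add0r addr0.
by rewrite /GRing.scale /= mulr1.
Unshelve. all: by end_near.
Qed.

Lemma sum_cyc (R : realType) (d : nat) (x : 'I_d -> R) :
  \sum_(k < d) (x (ord_pred k) - x (ordS k)) * x k = 0.
Proof.
under eq_bigr do rewrite mulrBl.
rewrite sumrB; apply/eqP; rewrite subr_eq0; apply/eqP.
rewrite (reindex (@ordS d)) /=; last by exists (@ord_pred d) => i _; [rewrite ordSK|rewrite ord_predK].
by apply: eq_bigr => i _; rewrite ordSK mulrC.
Qed.

Theorem lemma4p1 (R : realType) (d : nat) (kap lam del : R)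
  (hd : (2 <= d)%N) (hkap : 0 < kap) (hlam : 0 < lam) (hdel : 0 < del)
  (p : nat) (x : 'I_d -> R)
  (hx : nonneg_orthant x) (hb : drift kap lam del x <> (fun _ => 0)) :
  exists g : 'I_d -> R,
    is_grad_plus (fun y => U lam del y ^+ p) x g /\
    \sum_(k < d) g k * gamma kap lam del x k <= 0.
Proof.
set S := \sum_(i < d) x i.
set c := d%:R * lam / del.
set a := S - c.
have l1x : l1norm x = S by apply: eq_bigr => i _; rewrite ger0_norm.
have l1s : forall k h, 0 < h -> l1norm (Defs.shift x k h) = S + h.
  move=> k h hh; rewrite /l1norm (bigD1 k) //= /Defs.shift eqxx.
  rewrite [S](bigD1 k) //= (@ger0_norm _ (x k + h)); last by rewrite addr_ge0 // ?ltW.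
  rewrite -addrA [h + _]addrC addrA; congr (_ + _).
  by congr (_ + _); apply: eq_bigr => i /negbTE ->; rewrite ger0_norm.
exists (fun _ => (2 * p)%:R * a ^+ (2 * p).-1).
split.
- move=> k /=.
  have C := cvg_dnbhs_at_right (@qcvg R a (2 * p)).
  apply: (cvg_trans _ C).
  apply: near_eq_cvg; near=> h.
  have hh : 0 < h by near: h; exact: nbhs_right_gt.
  rewrite /U l1s // l1x -/c -/a -!exprM mulrC.
  by rewrite (addrAC S h) -/a addrC.
- have sb : \sum_(k < d) drift kap lam del x k = - (del * a).
    rewrite /drift sumrB big_split /=.
    under eq_bigr do rewrite -mulrA.
    rewrite -mulr_sumr sum_cyc mulr0 add0r sumr_const card_ord -mulr_sumr -/S.
    rewrite /a /c -mulr_natl.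
    field. by rewrite gt_eqF.
  rewrite /gamma.
  under eq_bigr do rewrite mulrA.
  rewrite -mulr_suml -mulr_sumr sb mulrN mulNr oppr_le0.
  apply: divr_ge0; last exact: sqrtr_ge0.
  have Ha : 0 <= (2 * p)%:R * (a ^+ (2 * p).-1 * a).
    case: p => [|q]; first by rewrite muln0 mul0r.
    have -> : (2 * q.+1).-1 = (2 * q).+1 by rewrite mulnS.
    rewrite -exprSr -[(2 * q).+2]add2n -mulnS exprM.
    by rewrite mulr_ge0 // exprn_ge0 // sqr_ge0.
  have -> : (2 * p)%:R * a ^+ (2 * p).-1 * (del * a) = del * ((2 * p)%:R * (a ^+ (2 * p).-1 * a)) by ring.
  by rewrite mulr_ge0 // ltW.
Unshelve. all: by end_near.
Qed.
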